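(* Let $K$ be a field, $X$ a finite connected poset and $S\subseteq J(I(X,K))$. Then the ideal $\langle S\rangle$ of $I(X,K)$ generated by $S$ coincides with the Lie ideal $\langle S\rangle_L$ of $I(X,K)$ generated by $S$. Consequently, every Lie ideal of $I(X,K)$ contained in $J(I(X,K))$ is an (associative) ideal.
   Context: $I(X,K)$ is the incidence algebra: functions $f:X\times X\to K$ with $f(x,y)=0$ unless $x\le y$, product $(fg)(x,y)=\sum_{x\le t\le y}f(x,t)g(t,y)$, Lie bracket $[f,g]=fg-gf$. $J(I(X,K))=\{f: f(x,x)=0\ \forall x\}$ is the Jacobson radical. Connected means any two elements are joined by a sequence in which consecutive elements are in a covering relation. *)

(* Defs.v *)
From HB Require Import structures.
From mathcomp Require Import all_boot all_order all_algebra.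
Set Implicit Arguments. Unset Strict Implicit. Unset Printing Implicit Defensive.
Import Order.TTheory GRing.Theory.

(* Incidence algebra I(X,K) of a finite poset X over a field K.
   Elements are represented as functions X -> X -> K vanishing off the
   order relation. *)
Section Incidence.
Variables (d : Order.disp_t) (X : finPOrderType d) (K : fieldType).

Definition ifun := X -> X -> K.

Definition incidence (f : ifun) : Prop :=
  forall x y : X, ~~ (x <= y)%O -> f x y = 0%R.

Definition jradical (f : ifun) : Prop :=
  incidence f /\ forall x : X, f x x = 0%R.

Definition izero : ifun := fun _ _ => 0%R.
Definition iadd (f g : ifun) : ifun := fun x y => (f x y + g x y)%R.
Definition iscale (c : K) (f : ifun) : ifun := fun x y => (c * f x y)%R.
Definition imul (f g : ifun) : ifun :=
  fun x y => (\sum_(t : X | (x <= t)%O && (t <= y)%O) f x t * g t y)%R.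
Definition ibracket (f g : ifun) : ifun :=
  fun x y => (imul f g x y - imul g f x y)%R.

Definition is_subspace (I : ifun -> Prop) : Prop :=
  [/\ forall f, I f -> incidence f,
      I izero,
      forall f g, I f -> I g -> I (iadd f g)
    & forall c f, I f -> I (iscale c f)].

Definition is_ideal (I : ifun -> Prop) : Prop :=
  is_subspace I /\
  forall f g, I f -> incidence g -> I (imul f g) /\ I (imul g f).

Definition is_lie_ideal (I : ifun -> Prop) : Prop :=
  is_subspace I /\
  forall f g, I f -> incidence g -> I (ibracket f g).

Definition ideal_gen (S : ifun -> Prop) (f : ifun) : Prop :=
  forall I, is_ideal I -> (forall g, S g -> I g) -> I f.

Definition lie_ideal_gen (S : ifun -> Prop) (f : ifun) : Prop :=
  forall I, is_lie_ideal I -> (forall g, S g -> I g) -> I f.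

End Incidence.

Definition covers (d : Order.disp_t) (X : finPOrderType d) (x y : X) : bool :=
  (x < y)%O && [forall z : X, ~~ ((x < z)%O && (z < y)%O)].

Definition connected_poset (d : Order.disp_t) (X : finPOrderType d) : Prop :=
  forall x y : X, exists s : seq X,
    path (fun a b => covers a b || covers b a) x s /\ last x s = y.

(* Main.v *)
Require Import Defs.
From mathcomp Require Import all_boot all_order all_algebra.
From Stdlib Require Import FunctionalExtensionality.
Set Implicit Arguments. Unset Strict Implicit. Unset Printing Implicit Defensive.
Import Order.Theory GRing.Theory.
Local Open Scope ring_scope.

Section S.
Variables (d : Order.disp_t) (X : finPOrderType d) (K : fieldType).
Implicit Types (f g h : ifun X K) (a b c x y : X).

Definition E a b : ifun X K := fun x y => if (x == a) && (y == b) then 1 else 0.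

Lemma sum_pick (P : pred X) (F : X -> K) b :
  \sum_(t | P t) (if t == b then F t else 0) = if P b then F b else 0.
Proof.
case Pb: (P b).
  rewrite (bigD1 b) //= eqxx big1 ?addr0 // => t /andP[_ /negbTE ->] //.
by apply: big1 => t Pt; case: eqP => // tb; rewrite tb Pb in Pt.
Qed.

Lemma mulE_l a b g x y : imul (E a b) g x y =
  if (x == a) && (x <= b)%O && (b <= y)%O then g b y else 0.
Proof.
rewrite /imul /E. idtac. case: (x =P a) => [_|nxa] /=.
  transitivity (\sum_(t | (x <= t)%O && (t <= y)%O) (if t == b then g t y else 0)).
    by apply: eq_bigr => t _; case: eqP; rewrite ?mul1r ?mul0r.
  by rewrite sum_pick.
by apply: big1 => t _; rewrite mul0r.
Qed.

Lemma mulE_r a b g x y : imul g (E a b) x y =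
  if (y == b) && (x <= a)%O && (a <= y)%O then g x a else 0.
Proof.
rewrite /imul /E; case: (y =P b) => [_|nyb] /=.
  transitivity (\sum_(t | (x <= t)%O && (t <= y)%O) (if t == a then g x t else 0)).
    by apply: eq_bigr => t _; case: eqP; rewrite ?andbT ?mulr1 ?mulr0.
  by rewrite sum_pick.
by apply: big1 => t _; rewrite andbF mulr0.
Qed.

Lemma iscale0 h : iscale 0 h = @izero _ X K.
Proof. by do 2 (apply: functional_extensionality => ?); rewrite /iscale mul0r. Qed.

Definition isum (T : Type) (s : seq T) (F : T -> ifun X K) : ifun X K :=
  foldr (fun i acc => iadd (F i) acc) (@izero _ X K) s.

Lemma isumE (T : Type) (s : seq T) F x y : isum s F x y = \sum_(i <- s) F i x y.
Proof. elim: s => [|i s IH]; first by rewrite big_nil. by rewrite big_cons /= /iadd IH. Qed.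

Lemma isum_in (L : ifun X K -> Prop) (T : Type) (s : seq T) F :
  is_subspace L -> (forall i, L (F i)) -> L (isum s F).
Proof.
case=> _ L0 LD _ HF; elim: s => [|i s IH] //=; exact: LD.
Qed.

Lemma jrad_lie : is_lie_ideal (@jradical d X K).
Proof.
split; first split.
- by move=> f [].
- by split => // x y _.
- move=> f g [If Df] [Ig Dg]; split=> [x y nxy|x]; rewrite /iadd; [by rewrite (If _ _ nxy) (Ig _ _ nxy) addr0 | by rewrite Df Dg addr0].
- move=> c f [If Df]; split=> [x y nxy|x]; rewrite /iscale; [by rewrite (If _ _ nxy) mulr0 | by rewrite Df mulr0].
move=> f g [If Df] Ig; split=> [x y nxy|x].
  by rewrite /ibracket /imul !big1 ?subr0 // => t /andP[xt ty]; move: nxy; rewrite (le_trans xt ty).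
rewrite /ibracket /imul !big1 ?subr0 // => t /andP[xt tx]; have := le_anti (andb_true_intro (conj xt tx)) => ->.
  by rewrite Df ?mul0r ?mulr0.
by rewrite Df ?mul0r ?mulr0.
Qed.


Lemma incE a b : (a <= b)%O -> incidence (E a b).
Proof.
move=> ab x y nxy; rewrite /E; case: (x =P a) => [xa|] //=; case: (y =P b) => [yb|] //=.
by move: nxy; rewrite xa yb ab.
Qed.

Lemma ideal_lie (I : ifun X K -> Prop) : is_ideal I -> is_lie_ideal I.
Proof.
move=> [[HI H0 HD HS] HM]; split; first by split.
move=> f g If Ig; have [A B] := HM f g If Ig.
have -> : ibracket f g = iadd (imul f g) (iscale (-1) (imul g f)).
  by do 2 (apply: functional_extensionality => ?); rewrite /iadd /iscale /ibracket mulN1r.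
by apply: HD => //; apply: HS.
Qed.

Section L.
Variable L : ifun X K -> Prop.
Hypothesis HL : is_lie_ideal L.
Hypothesis HJ : forall f, L f -> jradical f.

Lemma Lext f g : L f -> (forall x y, f x y = g x y) -> L g.
Proof.
move=> Lf e; have -> // : g = f.
by do 2 (apply: functional_extensionality => ?); rewrite e.
Qed.

Lemma Lsc (k : K) f : L f -> L (iscale k f). Proof. by case: HL => -[] _ _ _ H _; apply: H. Qed.
Lemma LD f g : L f -> L g -> L (iadd f g). Proof. by case: HL => -[] _ _ H _ _; apply: H. Qed.
Lemma L0 : L (@izero _ X K). Proof. by case: HL => -[]. Qed.
Lemma Lbr f g : L f -> incidence g -> L (ibracket f g). Proof. by case: HL => _; apply. Qed.

Lemma comp a b f : L f -> (a < b)%O -> L (iscale (f a b) (E a b)).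
Proof.
move=> Lf ab.
have h2 := Lbr (Lbr Lf (incE (le_refl a))) (incE (le_refl b)).
have [If Df] := HJ Lf.
have nab : a != b by rewrite lt_neqAle in ab; case/andP: ab.
have aleb : (a <= b)%O by apply: ltW.
have nba : ~~ (b <= a)%O by rewrite lt_geF.
apply: (Lext (Lsc (-1) h2)) => x y.
have nba' : (b == a) = false by rewrite eq_sym (negbTE nab).
rewrite /iscale /ibracket !mulE_r !mulE_l !mulE_r /E nba' (negbTE nba) /= !andbF /=.
case: (x =P a) => [->|xa]; case: (y =P b) => [->|yb] /=; rewrite ?eqxx ?nba' ?aleb ?le_refl ?(negbTE nba) /=;
  by rewrite ?(negbTE nab) ?subrr ?if_same ?sub0r ?subr0 ?mulr0 ?mulr1 ?mulN1r ?opprK ?oppr0.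
Qed.


Lemma EL a b f : L f -> (a < b)%O -> f a b != 0 -> L (E a b).
Proof.
move=> Lf ab nz; apply: (Lext (Lsc (f a b)^-1 (comp Lf ab))) => x y.
by rewrite /iscale mulrA mulVf // mul1r.
Qed.

Lemma EL_trans a b c : L (E a b) -> (a < b)%O -> (b < c)%O -> L (E a c).
Proof.
move=> Lab ab bc; apply: (Lext (Lbr Lab (incE (ltW bc)))) => x y.
have nac : (a == c) = false.
  by apply/negbTE; have := lt_trans ab bc; rewrite lt_neqAle => /andP[].
rewrite /ibracket mulE_l mulE_r /E nac !andbF !if_same subr0.
case: (x =P a) => [->|] /=; last by [].
case: (y =P c) => [->|_] /=; by rewrite ?andbF ?if_same // eqxx (ltW ab) (ltW bc).

Qed.

Lemma mulEL a b g : L (E a b) -> (a < b)%O -> incidence g -> L (imul (E a b) g).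
Proof.
move=> Lab ab Ig.
pose F := fun c => iscale (g b c) (E a c).
have LF : forall c, L (F c).
  move=> c; rewrite /F; case bc: (b <= c)%O.
    case: (b =P c) => [<-|nbc]; first exact: Lsc.
    by apply: Lsc; apply: EL_trans Lab ab _; rewrite lt_neqAle bc andbT; apply/eqP.
  by rewrite (Ig _ _ (negbT bc)) iscale0; apply: L0.
apply: (Lext (isum_in (index_enum X) HL.1 LF)) => x y.
rewrite isumE mulE_l /F /iscale /E.
case: (x =P a) => [->|] /=; last by rewrite big1 // => c _; rewrite mulr0.
rewrite (ltW ab) /=.
transitivity (\sum_(c | true) (if c == y then g b c else 0)).
  by apply: eq_bigr => c _; rewrite eq_sym; case: eqP; rewrite ?mulr1 ?mulr0.
rewrite sum_pick; case: ifP => // /negbT nby.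
by rewrite Ig.
Qed.

Lemma mul_L f g : L f -> incidence g -> L (imul f g).
Proof.
move=> Lf Ig; have [If Df] := HJ Lf.
pose F := fun a => isum (index_enum X) (fun b => iscale (f a b) (imul (E a b) g)).
have LF : forall a, L (F a).
  move=> a; apply: isum_in HL.1 _ => b.
  have [->|nz] := eqVneq (f a b) 0; first by rewrite iscale0; apply: L0.
  have ab : (a < b)%O.
    rewrite lt_neqAle; apply/andP; split.
      by apply/eqP => eab; move: nz; rewrite eab Df eqxx.
    by apply/negPn/negP => nab; move: nz; rewrite If // eqxx.
  by apply: Lsc; apply: mulEL => //; apply: EL Lf ab nz.
apply: (Lext (isum_in (index_enum X) HL.1 LF)) => x y.
rewrite isumE (bigD1 x) //= big1 ?addr0; last first.
  move=> a nax; rewrite /F isumE big1 // => b _.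
  by rewrite /iscale mulE_l eq_sym (negbTE nax) /= mulr0.
rewrite /F isumE; transitivity (\sum_(b : X) f x b * imul (E x b) g x y) => //.
rewrite [RHS]big_mkcond /=.
apply: eq_bigr => b _.
by rewrite mulE_l eqxx /=; case: ifP; rewrite ?mulr0.
Qed.

Lemma mul_R f g : L f -> incidence g -> L (imul g f).
Proof.
move=> Lf Ig; apply: (Lext (LD (mul_L Lf Ig) (Lsc (-1) (Lbr Lf Ig)))) => x y.
by rewrite /iadd /iscale /ibracket mulN1r opprB addrC subrK.
Qed.

Lemma lie_is_ideal : is_ideal L.
Proof. split; first exact: HL.1. by move=> f g Lf Ig; split; [apply: mul_L | apply: mul_R]. Qed.

End L.

Lemma gen_lie (S : ifun X K -> Prop) : (forall f, S f -> jradical f) ->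
  is_lie_ideal (lie_ideal_gen S).
Proof.
move=> HS; split; first split.
- by move=> f Hf; have [] := Hf _ (@jrad_lie) HS.
- by move=> I [[_ H0 _ _] _] _.
- by move=> f g Hf Hg I HI HSI; case: (HI) => -[_ _ HD _] _; apply: HD; [apply: Hf | apply: Hg].
- by move=> k f Hf I HI HSI; case: (HI) => -[_ _ _ HZ] _; apply: HZ; apply: Hf.
by move=> f g Hf Ig I HI HSI; case: (HI) => _ HB; apply: HB => //; apply: Hf.
Qed.

End S.

Theorem corollary3p5 (d : Order.disp_t) (X : finPOrderType d) (K : fieldType) :
  connected_poset X ->
  (forall S : ifun X K -> Prop,
     (forall f, S f -> jradical f) ->
     forall f, ideal_gen S f <-> lie_ideal_gen S f) /\
  (forall L : ifun X K -> Prop,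
     is_lie_ideal L -> (forall f, L f -> jradical f) -> is_ideal L).
Proof.
move=> _; split; last by move=> L HL HJ; apply: lie_is_ideal.
move=> S HS f; split.
  move=> Hf; apply: Hf; last by move=> g Sg I _ HSI; apply: HSI.
  apply: lie_is_ideal; first exact: gen_lie.
  by move=> g Hg; apply: Hg; [apply: jrad_lie | apply: HS].
by move=> Hf I HI HSI; apply: Hf => //; apply: ideal_lie.
Qed.
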